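(* For any $f,g\in[0,1]$ with $G(f)\ne G(g)$, where $G(h)=\overline{o}_1(h)^p\,\overline{o}_2(h)^{1-p}$, $$\lim_{n\to\infty}\mathbb{P}\big(W_0W_n(f)>V_0W_n(g)\big)=\begin{cases}1,& G(f)>G(g),\\ 0,& G(f)<G(g).\end{cases}$$
   Context: Fix real numbers $o_{11},o_{12},o_{21},o_{22}$ with $o_{11}>o_{12}\ge 0$, $o_{22}>o_{21}\ge 0$, $o_{11}>1$, $o_{22}>1$, and $p\in[0,1]$ (convention $0^0=1$). Let $x_1,x_2,\ldots$ be i.i.d. Bernoulli$(p)$. For $h\in[0,1]$ put $\overline{o}_1(h)=o_{11}h+o_{12}(1-h)$, $\overline{o}_2(h)=o_{21}h+o_{22}(1-h)$, and $W_n(h)=\prod_{i=1}^n\overline{o}_1(h)^{x_i}\overline{o}_2(h)^{1-x_i}$; both strategies use the same environment sequence. The random initial sizes $W_0,V_0$ are independent, each uniform on $[0,a]$ for some fixed $a>0$, and independent of $(x_i)$. *)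

(* Defs.v *)
From HB Require Import structures.
From mathcomp Require Import all_boot all_order all_algebra.
From mathcomp Require Import all_classical all_reals all_analysis.
Set Implicit Arguments. Unset Strict Implicit. Unset Printing Implicit Defensive.
Import Order.TTheory GRing.Theory Num.Theory.
Local Open Scope classical_set_scope.
Local Open Scope ring_scope.

Definition mutually_independent (d : measure_display) (T : measurableType d)
  (R : realType) (P : probability T R) (I : eqType) (X : I -> T -> R) : Prop :=
  (forall i, measurable_fun setT (X i)) /\
  forall (J : seq I) (B : I -> set R), uniq J -> (forall j, measurable (B j)) ->
    P (\bigcap_(j in [set j | j \in J]) (X j @^-1` B j)) =
    (\prod_(j <- J) P (X j @^-1` B j))%E.

Definition is_bernoulli (d : measure_display) (T : measurableType d)
  (R : realType) (P : probability T R) (p : R) (X : T -> R) : Prop :=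
  P (X @^-1` [set 1]) = p%:E /\ P (X @^-1` [set 0]) = (1 - p)%:E.

Definition is_uniform0a (d : measure_display) (T : measurableType d)
  (R : realType) (P : probability T R) (a : R) (X : T -> R) : Prop :=
  forall B : set R, measurable B ->
    P (X @^-1` B) = ((a^-1)%:E * (@lebesgue_measure R) (B `&` `[0%R, a]%classic))%E.

Definition obar1 (R : realType) (o11 o12 h : R) : R := o11 * h + o12 * (1 - h).
Definition obar2 (R : realType) (o21 o22 h : R) : R := o21 * h + o22 * (1 - h).

(** W_n(h)(t) = prod_{i=1}^n obar1(h)^{x_i} obar2(h)^{1-x_i}  (powR: 0^0 = 1) *)
Definition Wn (R : realType) (T : Type) (o11 o12 o21 o22 : R)
  (x : nat -> T -> R) (n : nat) (h : R) (t : T) : R :=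
  \prod_(1 <= i < n.+1)
    (obar1 o11 o12 h `^ x i t * obar2 o21 o22 h `^ (1 - x i t)).

Definition Grate (R : realType) (o11 o12 o21 o22 p h : R) : R :=
  obar1 o11 o12 h `^ p * obar2 o21 o22 h `^ (1 - p).

Definition joint_family (T : Type) (R : Type) (W0 V0 : T -> R)
  (x : nat -> T -> R) (k : nat) : T -> R :=
  if k == 0%N then W0 else if k == 1%N then V0 else x k.-1.

(* Main.v *)
Require Import Defs.
From HB Require Import structures.
From mathcomp Require Import all_boot all_order all_algebra.
From mathcomp Require Import all_classical all_reals all_analysis.
From mathcomp Require Import ring lra.
Import Order.TTheory GRing.Theory Num.Theory.
Local Open Scope classical_set_scope.
Local Open Scope ring_scope.
Fixpoint allseq (n : nat) : seq (seq bool) :=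
  if n is n'.+1 then map (cons true) (allseq n') ++ map (cons false) (allseq n')
  else [:: [::]].

Lemma mem_cons_map (c : bool) (L : seq (seq bool)) t :
  (t \in map (cons c) L) = if t is b :: s then (b == c) && (s \in L) else false.
Proof.
case: t => [|b s]; first by apply/mapP => -[].
apply/mapP/andP => [[u uL [-> ->]]|[/eqP -> sL]]; first by split.
by exists s.
Qed.

Lemma mem_allseq n s : (s \in allseq n) = (size s == n).
Proof.
elim: n s => [|n IH] s; first by case: s => [|b s]; rewrite inE.
rewrite /= mem_cat !mem_cons_map; case: s => [|b s] /=; first by [].
rewrite eqSS IH; case: b => /=; [exact: orbF|by []].
Qed.

Lemma uniq_allseq n : uniq (allseq n).
Proof.
elim: n => [//|n IH] /=.
rewrite cat_uniq !map_inj_uniq //; try by move=> ? ? [].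
rewrite IH /= andbT; apply/hasPn => s /mapP[u _ ->].
by rewrite /= mem_cons_map.
Qed.

Section Disc.
Variables (R : realType) (p : R).
Definition wt (b : bool) : R := if b then p else 1 - p.
Definition w (s : seq bool) : R := \prod_(b <- s) wt b.
Definition cnt (s : seq bool) : R := (count id s)%:R.

Lemma sum_allseqS n (F : seq bool -> R) :
  \sum_(s <- allseq n.+1) F s = \sum_(s <- allseq n) F (true :: s) + \sum_(s <- allseq n) F (false :: s).
Proof. by rewrite /= big_cat !big_map. Qed.

Lemma sum_w n : \sum_(s <- allseq n) w s = 1.
Proof.
elim: n => [|n IH]; first by rewrite /= big_seq1 /w big_nil.
rewrite sum_allseqS.
under eq_bigr do rewrite /w big_cons.
under [X in _ + X]eq_bigr do rewrite /w big_cons.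
by rewrite -!mulr_sumr IH /wt; ring.
Qed.

Lemma sum_w1 n : \sum_(s <- allseq n) w s * (cnt s - n%:R * p) = 0.
Proof.
elim: n => [|n IH]; first by rewrite /= big_seq1 /cnt /=; ring.
rewrite sum_allseqS.
have E : forall b, \sum_(s <- allseq n) w (b :: s) * (cnt (b :: s) - n.+1%:R * p)
   = wt b * ((b%:R - p) * \sum_(s <- allseq n) w s + \sum_(s <- allseq n) w s * (cnt s - n%:R * p)).
  move=> b; rewrite (eq_bigr (fun s => wt b * (b%:R - p) * w s + wt b * (w s * (cnt s - n%:R * p)))); last first.
    by move=> s _; rewrite /w big_cons /cnt /= natrD; case: b => /=; ring.
  rewrite big_split /= -!mulr_sumr; ring.
rewrite !E IH sum_w /wt /=; ring.
Qed.

Lemma sum_w2 n : \sum_(s <- allseq n) w s * (cnt s - n%:R * p) ^+ 2 = n%:R * (p * (1 - p)).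
Proof.
elim: n => [|n IH]; first by rewrite /= big_seq1 /cnt /=; ring.
rewrite sum_allseqS.
have E : forall b, \sum_(s <- allseq n) w (b :: s) * (cnt (b :: s) - n.+1%:R * p) ^+ 2
   = wt b * ((b%:R - p) ^+ 2 * \sum_(s <- allseq n) w s
      + 2 * (b%:R - p) * \sum_(s <- allseq n) w s * (cnt s - n%:R * p)
      + \sum_(s <- allseq n) w s * (cnt s - n%:R * p) ^+ 2).
  move=> b; rewrite (eq_bigr (fun s => wt b * (b%:R - p) ^+ 2 * w s + (wt b * 2 * (b%:R - p)) * (w s * (cnt s - n%:R * p)) + wt b * (w s * (cnt s - n%:R * p) ^+ 2))); last first.
    by move=> s _; rewrite /w big_cons /cnt /= natrD; case: b => /=; ring.
  rewrite !big_split /= -!mulr_sumr; ring.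
rewrite !E IH sum_w sum_w1 /wt /=; ring.
Qed.

End Disc.
Arguments wt {R}. Arguments w {R}.
Arguments cnt {R}.

Lemma prodEFin (R : realType) (I : Type) (s : seq I) (F : I -> R) :
  (\prod_(i <- s) (F i)%:E)%E = (\prod_(i <- s) F i)%:E.
Proof. by elim: s => [|a s IH]; rewrite ?big_nil ?big_cons ?IH ?EFinM. Qed.

Section Prob.
Context (R : realType) (d : measure_display) (T : measurableType d) (P : probability T R).
Variables (x : nat -> T -> R) (p : R).
Hypothesis mx : forall i, measurable_fun setT (x i.+1).
Hypothesis xb : forall i, is_bernoulli P p (x i.+1).
Hypothesis xind : forall n (B : nat -> set R), (forall i, measurable (B i)) ->
  P (\bigcap_(i in [set i | (i < n)%N]) (x i.+1 @^-1` B i)) = (\prod_(i < n) P (x i.+1 @^-1` B i))%E.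
Hypothesis p01 : 0 <= p <= 1.

Definition Bs (s : seq bool) i : set R := if nth false s i then [set 1] else ~` [set 1].
Definition Ev n s := \bigcap_(i in [set i | (i < n)%N]) (x i.+1 @^-1` Bs s i).
Definition pat n t := [seq x i.+1 t == 1 | i <- iota 0 n].

Lemma size_pat n t : size (pat n t) = n.
Proof. by rewrite size_map size_iota. Qed.

Lemma mBs s i : measurable (Bs s i).
Proof. by rewrite /Bs; case: nth; [exact: measurable_set1|apply: measurableC; exact: measurable_set1]. Qed.

Lemma mpre i B : measurable B -> measurable (x i.+1 @^-1` B).
Proof. by move=> mB; rewrite -[X in measurable X]setTI; exact: mx. Qed.

Lemma mEv n s : measurable (Ev n s).
Proof. by apply: bigcap_measurableType => i _; apply: mpre; apply: mBs. Qed.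

Lemma PBs s i : P (x i.+1 @^-1` Bs s i) = (wt p (nth false s i))%:E.
Proof.
rewrite /Bs /wt; case: nth; first exact: (xb i).1.
rewrite -preimage_setC probability_setC; last (apply: mpre; exact: measurable_set1).
by rewrite (xb i).1 EFinB.
Qed.

Lemma P_Ev n s : size s = n -> P (Ev n s) = (w p s)%:E.
Proof.
move=> sz; rewrite /Ev xind; last exact: mBs.
under eq_bigr do rewrite PBs.
rewrite prodEFin /w (big_nth false) big_mkord sz //.
Qed.

Lemma Ev_pat n s : size s = n -> Ev n s = [set t | pat n t = s].
Proof.
move=> sz; apply/seteqP; split => t /=.
- move=> H; apply: (@eq_from_nth _ false); first by rewrite size_pat sz.
  move=> i; rewrite size_pat => iltn.
  rewrite (nth_map 0%N) ?size_iota // nth_iota // add0n.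
  have := H i iltn; rewrite /Bs /=; case: nth => /=; first by move->; rewrite eqxx.
  by move/eqP/negbTE.
- move=> <- i /= iltn; rewrite /Bs (nth_map 0%N) ?size_iota // nth_iota // add0n.
  by case: eqP.
Qed.

Lemma setL_cons n (Q : pred (seq bool)) s L :
  [set t | (pat n t \in s :: L) && Q (pat n t)] =
  (if Q s then [set t | pat n t = s] else set0) `|` [set t | (pat n t \in L) && Q (pat n t)].
Proof.
apply/seteqP; split => t /=; rewrite in_cons.
- move=> /andP[H1 H2]; case: (boolP (pat n t == s)) => [/eqP e|ne].
    by left; rewrite -e H2.
  by right; apply/andP; split => //; move: H1; rewrite (negbTE ne).
- case => [|/andP[H1 H2]]; last by rewrite H1 orbT H2.
  by case: ifP => // Qs /= e; rewrite e eqxx Qs.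
Qed.

Lemma P_setL n (Q : pred (seq bool)) L : uniq L -> all (fun s => size s == n) L ->
  measurable [set t | (pat n t \in L) && Q (pat n t)] /\
  P [set t | (pat n t \in L) && Q (pat n t)] = (\sum_(s <- L | Q s) w p s)%:E.
Proof.
elim: L => [|s L IH] /=.
  have -> : [set t | (pat n t \in [::]) && Q (pat n t)] = set0 by apply/seteqP; split.
  by rewrite big_nil measure0.
move=> /andP[sL uL] /andP[/eqP ssz aL]; have [mL PL] := IH uL aL.
have mS : measurable (if Q s then [set t | pat n t = s] else set0).
  by case: (Q s) => //; rewrite -Ev_pat //; exact: mEv.
rewrite setL_cons; split; first exact: measurableU.
have disj : (if Q s then [set t | pat n t = s] else set0) `&` [set t | (pat n t \in L) && Q (pat n t)] = set0.
  apply/seteqP; split => t //=; case: (Q s) => -[] //= e /andP[]; by rewrite e (negbTE sL).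
apply: (@etrans _ _ (P (if Q s then [set t | pat n t = s] else set0) + P [set t | (pat n t \in L) && Q (pat n t)])%E).
  exact: measureU.
rewrite PL big_cons; case: (Q s); last by rewrite measure0 add0e.
by rewrite -Ev_pat // P_Ev // EFinD.
Qed.

Lemma P_pat n (Q : pred (seq bool)) :
  measurable [set t | Q (pat n t)] /\
  P [set t | Q (pat n t)] = (\sum_(s <- allseq n | Q s) w p s)%:E.
Proof.
have -> : [set t | Q (pat n t)] = [set t | (pat n t \in allseq n) && Q (pat n t)].
  by apply/seteqP; split => t /=; rewrite mem_allseq size_pat eqxx.
apply: P_setL; first exact: uniq_allseq.
by apply/allP => s; rewrite mem_allseq.
Qed.

Lemma w_ge0 s : 0 <= w p s.
Proof.
case/andP: p01 => p0 p1.
elim: s => [|b s IH]; first by rewrite /w big_nil.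
by rewrite /w big_cons mulr_ge0 // /wt; case: b => //; rewrite subr_ge0.
Qed.

Lemma cheb (n : nat) (c : R) : 0 < c ->
  (P [set t | (c <= `|cnt (pat n t) - n%:R * p|)%R] <= (n%:R * (p * (1 - p)) / c ^+ 2)%:E)%E.
Proof.
move=> c0; rewrite (P_pat n (fun s => c <= `|cnt s - n%:R * p|)).2 lee_fin.
rewrite -sum_w2 big_mkcond /= mulr_suml; apply: ler_sum => s _.
have w0 := w_ge0 s.
case: ifP => H.
  rewrite -mulrA; apply: ler_peMr => //; rewrite ler_pdivlMr; last exact: exprn_gt0.
  rewrite mul1r.
  have H' : c <= `|cnt s - n%:R * p| by rewrite H.
  rewrite -[X in _ <= X]real_normK ?num_real //.
  have := normr_ge0 (cnt s - n%:R * p); nra.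
by apply: divr_ge0; [apply: mulr_ge0 => //; exact: sqr_ge0 | exact: sqr_ge0].
Qed.

Definition Nx i := x i.+1 @^-1` (~` ([set 0] `|` [set 1])).

Lemma P_Nx i : P (Nx i) = 0%E.
Proof.
rewrite /Nx -preimage_setC probability_setC; last by apply: mpre; apply: measurableU; exact: measurable_set1.
rewrite preimage_setU.
have -> : (P (x i.+1 @^-1` [set 0%R] `|` x i.+1 @^-1` [set 1%R]) =
    P (x i.+1 @^-1` [set 0%R]) + P (x i.+1 @^-1` [set 1%R]))%E.
  apply: measureU.
  - apply: mpre; exact: measurable_set1.
  - apply: mpre; exact: measurable_set1.
  - by apply/seteqP; split => t //= [-> ]; apply/eqP; rewrite eq_sym oner_eq0.
rewrite (xb i).1 (xb i).2 -EFinD; congr (_%:E); ring.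
Qed.

Fixpoint Nall n := if n is n'.+1 then Nall n' `|` Nx n' else set0.

Lemma Nall_spec n : measurable (Nall n) /\ P (Nall n) = 0%E.
Proof.
elim: n => [|n [mN PN]] /=; first by rewrite measure0.
have mX : measurable (Nx n) by apply: mpre; apply/measurableC/measurableU; exact: measurable_set1.
split; first exact: measurableU.
apply/eqP; rewrite eq_le measure_ge0 andbT.
by rewrite -PN -[X in (_ <= X)%E]adde0 -(P_Nx n) measureU2.
Qed.

Lemma notNall n t : ~ Nall n t -> forall i, (i < n)%N -> x i.+1 t = 0 \/ x i.+1 t = 1.
Proof.
elim: n => [//|n IH] /= H i; rewrite ltnS leq_eqVlt => /orP[/eqP ->|iltn].
  apply: contrapT => H'; apply: H; right => -[]; tauto.
by apply: IH => // N; apply: H; left.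
Qed.

End Prob.

Lemma geo (R : realType) (A eps a b : R) : 0 <= b -> b < a -> 0 < A -> 0 < eps ->
  exists N, forall n, (N <= n)%N -> A * b ^+ n < eps * a ^+ n.
Proof.
move=> b0 ba A0 e0; have a0 : 0 < a by exact: le_lt_trans ba.
have z1 : `|b / a| < 1.
  by rewrite ger0_norm; [rewrite ltr_pdivrMr // mul1r | exact: divr_ge0 b0 (ltW a0)].
have ep : 0 < eps / A by exact: divr_gt0.
have /cvgrPdist_lt /(_ _ ep) [N _ HN] := cvg_expr z1.
exists N => n Nn; have := HN n Nn.
rewrite /= sub0r normrN ger0_norm; last by apply: exprn_ge0; exact: divr_ge0 b0 (ltW a0).
rewrite expr_div_n.
rewrite ltr_pdivrMr ?exprn_gt0 // => h.
rewrite (_ : eps = A * (eps / A)); last by rewrite mulrC divfK ?gt_eqF.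
by rewrite -mulrA ltr_pM2l.
Qed.

Lemma det (R : realType) (a1 a2 b1 b2 p A eps : R) :
  0 <= a1 -> 0 <= a2 -> 0 <= b1 -> 0 <= b2 -> 0 <= p <= 1 -> 0 < A -> 0 < eps ->
  b1 `^ p * b2 `^ (1 - p) < a1 `^ p * a2 `^ (1 - p) ->
  exists (c : nat -> R) (N : nat), (forall n, (N <= n)%N -> 0 < c n) /\
  (forall eta, 0 < eta -> exists N', forall n, (N' <= n)%N ->
      n%:R * (p * (1 - p)) / c n ^+ 2 <= eta) /\
  (forall n k, (N <= n)%N -> (k <= n)%N -> `|k%:R - n%:R * p| < c n ->
     A * (b1 ^+ k * b2 ^+ (n - k)) < eps * (a1 ^+ k * a2 ^+ (n - k))).
Proof.
move=> a1g a2g b1g b2g /andP[pg pl] A0 e0 G.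
have [p0|p0] := eqVneq p 0.
  subst p; move: G; rewrite subr0 !powRr0 !powRr1 // !mul1r => G.
  have [N HN] := @geo _ A eps a2 b2 b2g G A0 e0.
  exists (fun=> 1/2), N; split => //; split.
    by move=> eta eta0; exists 0%N => n _; rewrite mul0r mulr0 mul0r ltW.
  move=> n k Nn kn; rewrite mulr0 subr0.
  case: k kn => [_ _|k kn]; first by rewrite !expr0 !mul1r subn0; exact: HN.
  rewrite ger0_norm ?ler0n // => h; exfalso.
  have : 1 <= k.+1%:R :> R by rewrite ler1n.
  lra.
have [p1|p1] := eqVneq p 1.
  subst p; move: G; rewrite subrr !powRr0 !powRr1 // !mulr1 => G.
  have [N HN] := @geo _ A eps a1 b1 b1g G A0 e0.
  exists (fun=> 1/2), N; split => //; split.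
    by move=> eta eta0; exists 0%N => n _; rewrite !mulr0 mul0r ltW.
  move=> n k Nn kn; rewrite mulr1 => hk.
  have kn' : k = n.
    apply/eqP; rewrite eqn_leq kn /= leqNgt; apply/negP => kn2.
    have h2 : k%:R + 1 <= n%:R :> R by rewrite natr1 ler_nat.
    move: hk; rewrite ltr_norml => /andP[h3 h4]; lra.
  by rewrite kn' subnn !expr0 !mulr1; exact: HN.
have pp : 0 < p by rewrite lt_neqAle eq_sym p0.
have qq : 0 < 1 - p by rewrite subr_gt0 lt_neqAle p1.
have p0' : p != 0 by [].
have hpq1 : p * (1 - p) <= p by nra.
have hpq2 : p * (1 - p) <= 1 - p by nra.
have q0' : 1 - p != 0 by rewrite gt_eqF.
have a1p : 0 < a1.
  rewrite lt_neqAle a1g andbT; apply/eqP => a10; move: G; rewrite -a10 powR0 // mul0r => h.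
  have := mulr_ge0 (powR_ge0 b1 p) (powR_ge0 b2 (1 - p)); lra.
have a2p : 0 < a2.
  rewrite lt_neqAle a2g andbT; apply/eqP => a20; move: G; rewrite -a20 powR0 // mulr0 => h.
  have := mulr_ge0 (powR_ge0 b1 p) (powR_ge0 b2 (1 - p)); lra.
suff [δ [N1 [δ0 [δp [δq key]]]]] : exists δ N1, 0 < δ /\ δ <= p /\ δ <= 1 - p /\
  (forall n k, (N1 <= n)%N -> (k <= n)%N -> `|k%:R - n%:R * p| < n%:R * δ ->
     A * (b1 ^+ k * b2 ^+ (n - k)) < eps * (a1 ^+ k * a2 ^+ (n - k))).
  exists (fun n => n%:R * δ), (maxn 1 N1); split.
    by move=> n; rewrite geq_max => /andP[n1 _]; rewrite mulr_gt0 // ltr0n.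
  split; last first.
    by move=> n k; rewrite geq_max => /andP[_ nN]; apply: key.
  move=> eta eta0.
  exists (maxn 1 (Num.Def.trunc (p * (1 - p) / (δ ^+ 2 * eta))).+1) => n.
  rewrite geq_max => /andP[n1 nN].
  have n0 : 0 < n%:R :> R by rewrite ltr0n.
  have h := truncnS_gt (p * (1 - p) / (δ ^+ 2 * eta)).
  have h2 : (Num.Def.trunc (p * (1 - p) / (δ ^+ 2 * eta))).+1%:R <= n%:R :> R by rewrite ler_nat.
  have h3 : p * (1 - p) < n%:R * (δ ^+ 2 * eta).
    by rewrite -ltr_pdivrMr ?mulr_gt0 ?exprn_gt0 //; lra.
  rewrite ler_pdivrMr ?exprn_gt0 ?mulr_gt0 //.
  nra.
have [b10|b1p] := eqVneq b1 0.
  exists (p * (1 - p)), 0%N; split; first exact: mulr_gt0.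
  split; first exact: hpq1.
  split; first exact: hpq2.
  move=> n k _ kn hk.
  have k0 : k != 0%N.
    apply/eqP => k0; move: hk; rewrite k0 sub0r normrN ger0_norm ?mulr_ge0 //.
    have : 0 <= n%:R :> R by [].
    move=> h1 h2; nra.
  rewrite b10 expr0n (negbTE k0) mul0r mulr0.
  by rewrite mulr_gt0 // mulr_gt0 // exprn_gt0.
have [b20|b2p] := eqVneq b2 0.
  exists (p * (1 - p)), 0%N; split; first exact: mulr_gt0.
  split; first exact: hpq1.
  split; first exact: hpq2.
  move=> n k _ kn hk.
  have k0 : (n - k)%N != 0%N.
    rewrite subn_eq0 -ltnNge; rewrite leq_eqVlt in kn; case/orP: kn => // /eqP kn.
    exfalso; move: hk; rewrite kn ger0_norm; last first.
      by have := ler0n R n; nra.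
    have : 0 <= n%:R :> R by [].
    move=> h1 h2; nra.
  rewrite b20 expr0n (negbTE k0) mulr0 mulr0.
  by rewrite mulr_gt0 // mulr_gt0 // exprn_gt0.
have b1q : 0 < b1 by rewrite lt_neqAle eq_sym b1p.
have b2q : 0 < b2 by rewrite lt_neqAle eq_sym b2p.
move: G; rewrite /powR !gt_eqF // -!expRD ltr_expR => G.
set L := ln b1 - ln a1; set M := ln b2 - ln a2.
set γ := - (p * L + (1 - p) * M).
have γ0 : 0 < γ by rewrite /γ /L /M; lra.
set δ0 := γ / (2 * (`|L - M| + 1)).
have δ00 : 0 < δ0 by rewrite divr_gt0 // mulr_gt0 // ltr_wpDl.
exists (Num.min (Num.min p (1 - p)) δ0).
exists (Num.Def.trunc (2 * (ln A - ln eps) / γ)).+1.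
split; first by rewrite !lt_min pp qq δ00.
split; first by rewrite !ge_min lexx.
split; first by rewrite !ge_min lexx orbT.
set δ := Num.min _ _.
have δ0le : δ <= δ0 by rewrite !ge_min lexx orbT.
move=> n k nN kn hk.
have hpow : forall (b : R) (j : nat), 0 < b -> b ^+ j = expR (j%:R * ln b).
  by move=> b j b0; rewrite expRM_natl lnK ?posrE.
rewrite (hpow b1) // (hpow b2) // (hpow a1) // (hpow a2) // natrB //.
rewrite -[A]lnK ?posrE // -[eps]lnK ?posrE // -!expRD ltr_expR.
have e2 : (k%:R - n%:R * p) * (L - M) <= `|k%:R - n%:R * p| * `|L - M|.
  by rewrite -normrM; exact: ler_norm.
have e1 : `|k%:R - n%:R * p| * `|L - M| <= n%:R * δ * `|L - M|.
  by apply: ler_wpM2r => //; exact: ltW.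
have e3 : δ * (2 * (`|L - M| + 1)) <= γ.
  by rewrite -ler_pdivlMr ?mulr_gt0 // ltr_wpDl.
have hN := truncnS_gt (2 * (ln A - ln eps) / γ).
have hN2 : (Num.Def.trunc (2 * (ln A - ln eps) / γ)).+1%:R <= n%:R :> R by rewrite ler_nat.
have e4 : 2 * (ln A - ln eps) < n%:R * γ.
  by rewrite -ltr_pdivrMr //; lra.
have δpos : 0 <= δ by rewrite !le_min !ltW.
have e5 : n%:R * δ * `|L - M| <= n%:R * γ / 2.
  have := ler0n R n; have := normr_ge0 (L - M); nra.
have id : k%:R * ln b1 + (n%:R - k%:R) * ln b2 - (k%:R * ln a1 + (n%:R - k%:R) * ln a2)
   = - (n%:R * γ) + (k%:R - n%:R * p) * (L - M).
  by rewrite /γ /L /M; ring.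
lra.
Qed.

Section Unif.
Context (R : realType) (d : measure_display) (T : measurableType d) (P : probability T R).

Lemma unif_le (a : R) (W0 : T -> R) (eps : R) : 0 < a -> is_uniform0a P a W0 -> 0 <= eps ->
  (P (W0 @^-1` `]-oo, eps]) <= (eps / a)%:E)%E.
Proof.
move=> a0 U e0; rewrite U; last exact: measurable_itv.
have H : (lebesgue_measure (`]-oo, eps]%classic `&` `[0%R, a]%classic) <= eps%:E)%E.
  apply: (@le_trans _ _ (lebesgue_measure (`[0%R, eps]%classic : set R))).
    apply: le_measure; rewrite ?inE.
    - by apply: measurableI; exact: measurable_itv.
    - exact: measurable_itv.
    - by move=> y /= []; rewrite !in_itv /= => h1 /andP[h2 _]; rewrite h2 h1.
  rewrite lebesgue_measure_itv /=; case: ifP => _; last by rewrite lee_fin.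
  by rewrite sube0.
rewrite (_ : (eps / a)%:E = (a^-1)%:E * eps%:E)%E; last by rewrite -EFinM mulrC.
by apply: lee_wpmul2l => //; rewrite lee_fin invr_ge0 ltW.
Qed.

Lemma unif_out (a : R) (V0 : T -> R) : is_uniform0a P a V0 ->
  P (V0 @^-1` (~` `[0, a])) = 0%E.
Proof.
move=> U; rewrite U; last by apply: measurableC; exact: measurable_itv.
by rewrite setICl measure0 mule0.
Qed.

End Unif.

Lemma prod_if (R : realType) (s : seq bool) (u v : R) :
  \prod_(b <- s) (if b then u else v) = u ^+ count id s * v ^+ (size s - count id s).
Proof.
elim: s => [|b s IH]; first by rewrite big_nil !expr0 mulr1.
rewrite big_cons IH; case: b => /=.
  by rewrite add1n subSS exprS mulrA.
by rewrite add0n subSn ?count_size // exprS mulrCA.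
Qed.

Section Wn.
Context (R : realType) (d : measure_display) (T : measurableType d).
Variables (o11 o12 o21 o22 : R) (x : nat -> T -> R).

Lemma Wn_good n h t : 0 <= obar1 o11 o12 h -> 0 <= obar2 o21 o22 h ->
  (forall i, (i < n)%N -> x i.+1 t = 0 \/ x i.+1 t = 1) ->
  Wn o11 o12 o21 o22 x n h t =
  obar1 o11 o12 h ^+ count id (pat R d T x n t) *
  obar2 o21 o22 h ^+ (n - count id (pat R d T x n t)).
Proof.
move=> h1 h2 H.
rewrite -[X in (X - _)%N](size_pat R d T x n t) -prod_if /pat big_map /Wn big_add1 /=.
rewrite /index_iota subn0; apply: eq_big_seq => i; rewrite mem_iota add0n => /andP[_ iltn].
case: (H i iltn) => ->.
  by rewrite powRr0 subr0 powRr1 // mul1r eq_sym oner_eq0.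
by rewrite powRr1 // subrr powRr0 mulr1 eqxx.
Qed.

Lemma Wn_ge0 n h t : 0 <= Wn o11 o12 o21 o22 x n h t.
Proof. by rewrite /Wn; apply: prodr_ge0 => i _; rewrite mulr_ge0 ?powR_ge0. Qed.

Lemma mWn n h : (forall i, measurable_fun setT (x i.+1)) ->
  measurable_fun setT (Wn o11 o12 o21 o22 x n h).
Proof.
move=> mx; rewrite /Wn; apply: measurable_prod => i; rewrite mem_index_iota => /andP[i1 _].
case: i i1 => [//|i] _.
apply: measurable_realfun.measurable_funM.
  exact: (measurableT_comp (measurable_realfun.measurable_powRr _) (mx i)).
apply: (measurableT_comp (measurable_realfun.measurable_powRr _)).
by apply: measurable_realfun.measurable_funB => //; exact: mx.
Qed.

End Wn.

Lemma conv_one (R : realType) (d : measure_display) (T : measurableType d) (P : probability T R)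
  (E : nat -> set T) : (forall n, measurable (E n)) ->
  (forall eta : R, 0 < eta -> exists N, forall n, (N <= n)%N -> (P (~` E n) <= eta%:E)%E) ->
  (fun n => P (E n)) @ \oo --> 1%:E.
Proof.
move=> mE H.
have fin : forall n, P (E n) = (1 - fine (P (~` E n)))%:E.
  move=> n.
  have fn : P (~` E n) \is a fin_num.
    rewrite ge0_fin_numE ?measure_ge0 //.
    by apply: (le_lt_trans (probability_le1 _ _)) => //; [exact: measurableC | exact: ltry].
  rewrite EFinB fineK // -probability_setC ?setCK //; exact: measurableC.
apply: cvg_EFin; first by apply: nearW => n; rewrite fin.
apply/cvgrPdist_le => eta eta0; have [N HN] := H eta eta0.
exists N => // n /= Nn; rewrite fin /=.
have h0 : 0 <= fine (P (~` E n)) by apply: fine_ge0; exact: measure_ge0.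
have h1 : fine (P (~` E n)) <= eta.
  have := HN n Nn; rewrite -[P (~` E n)]fineK ?lee_fin //.
  rewrite ge0_fin_numE ?measure_ge0 //.
  by apply: (le_lt_trans (probability_le1 _ _)) => //; [exact: measurableC | exact: ltry].
by rewrite opprB addrC subrK ger0_norm.
Qed.

Arguments Wn_good {R d T o11 o12 o21 o22 x n h t}.

Lemma mainA_bound (R : realType) (d : measure_display) (T : measurableType d) (P : probability T R)
  (o11 o12 o21 o22 p a : R) (x : nat -> T -> R) (W0 V0 : T -> R) (f g : R) :
  0 <= p <= 1 -> 0 < a ->
  (forall i, measurable_fun setT (x i.+1)) -> (forall i, is_bernoulli P p (x i.+1)) ->
  (forall n (B : nat -> set R), (forall i, measurable (B i)) ->
    P (\bigcap_(i in [set i | (i < n)%N]) (x i.+1 @^-1` B i)) = (\prod_(i < n) P (x i.+1 @^-1` B i))%E) ->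
  measurable_fun setT W0 -> measurable_fun setT V0 ->
  is_uniform0a P a W0 -> is_uniform0a P a V0 ->
  0 <= obar1 o11 o12 f -> 0 <= obar2 o21 o22 f -> 0 <= obar1 o11 o12 g -> 0 <= obar2 o21 o22 g ->
  Grate o11 o12 o21 o22 p g < Grate o11 o12 o21 o22 p f ->
  forall eta : R, 0 < eta -> exists N, forall n, (N <= n)%N ->
   (P (~` [set t | (V0 t * Wn o11 o12 o21 o22 x n g t < W0 t * Wn o11 o12 o21 o22 x n f t)%R]) <= eta%:E)%E.
Proof.
move=> p01 a0 mx xb xind mW mV UW UV f1 f2 g1 g2 G eta eta0.
set eps := a * eta / 2.
have e0 : 0 < eps by rewrite /eps divr_gt0 // mulr_gt0.
have [c [N [cpos [cvar cdet]]]] := @det R _ _ _ _ _ _ _ f1 f2 g1 g2 p01 a0 e0 G.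
have [N' HN'] := cvar (eta / 2) (divr_gt0 eta0 (ltr0Sn R 1)).
exists (maxn N N') => n; rewrite geq_max => /andP[Nn N'n].
set A1 := W0 @^-1` `]-oo, eps].
set A2 := V0 @^-1` (~` `[0, a]).
set A3 := Nall R d T x n.
set A4 := [set t | (c n <= `|cnt (pat R d T x n t) - n%:R * p|)%R].
set E := [set t | V0 t * Wn o11 o12 o21 o22 x n g t < W0 t * Wn o11 o12 o21 o22 x n f t].
have m1 : measurable A1.
  rewrite -[A1]setTI; apply: (mW measurableT); exact: measurable_itv.
have m2 : measurable A2.
  rewrite -[A2]setTI; apply: (mV measurableT); apply: measurableC; exact: measurable_itv.
have m3 : measurable A3 := (Nall_spec _ _ _ P _ _ mx xb n).1.
have m4 : measurable A4 := (P_pat _ _ _ P _ _ mx xb xind n (fun s => c n <= `|cnt s - n%:R * p|)).1.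
have mE : measurable E.
  have mh : measurable_fun setT (fun t => W0 t * Wn o11 o12 o21 o22 x n f t - V0 t * Wn o11 o12 o21 o22 x n g t).
    apply: measurable_realfun.measurable_funB; apply: measurable_realfun.measurable_funM => //; exact: mWn.
  have -> : E = setT `&` (fun t => W0 t * Wn o11 o12 o21 o22 x n f t - V0 t * Wn o11 o12 o21 o22 x n g t) @^-1` `]0, +oo[.
    rewrite /E; apply/seteqP; split => t /=; first by move=> h; split => //; rewrite in_itv /= andbT subr_gt0.
    by move=> [_]; rewrite in_itv /= andbT subr_gt0.
  apply: (mh measurableT); exact: measurable_itv.
have sub : ~` E `<=` A1 `|` A2 `|` A3 `|` A4.
  move=> t nE; apply: contrapT => nb; apply: nE => /=.
  have n1 : ~ A1 t by move=> h; apply: nb; do 3 left.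
  have n2 : ~ A2 t by move=> h; apply: nb; left; left; right.
  have n3 : ~ A3 t by move=> h; apply: nb; left; right.
  have n4 : ~ A4 t by move=> h; apply: nb; right.
  have hW : eps < W0 t.
    by rewrite ltNge; apply/negP => h; apply: n1; rewrite /A1 /= in_itv /= h.
  have hV : V0 t \in `[0, a] by apply: contrapT => h; apply: n2.
  rewrite in_itv /= in hV; case/andP: hV => hV1 hV2.
  have hx := notNall _ _ _ _ _ _ n3.
  have hk : `|cnt (pat R d T x n t) - n%:R * p| < c n.
    by rewrite ltNge; apply/negP => h; apply: n4.
  rewrite /E /=.   rewrite (Wn_good f1 f2 hx) (Wn_good g1 g2 hx).
  have kn : (count id (pat R d T x n t) <= n)%N.
    by rewrite -[X in (_ <= X)%N](size_pat R d T x n t) count_size.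
  have := cdet n _ Nn kn hk.
  set Wg := _ ^+ _ * _ ^+ _; set Wf := _ ^+ _ * _ ^+ _.
  have Wg0 : 0 <= Wg by rewrite mulr_ge0 // exprn_ge0.
  have Wf0 : 0 <= Wf by rewrite mulr_ge0 // exprn_ge0.
  move=> h.
  have h1 : V0 t * Wg <= a * Wg by exact: ler_wpM2r.
  have h3 : eps * Wf <= W0 t * Wf by apply: ler_wpM2r => //; exact: ltW.
  lra.
have mU : measurable (A1 `|` A2 `|` A3 `|` A4) by do 3 apply: measurableU => //.
apply: (le_trans (le_measure P _ _ sub)); rewrite ?inE //; first exact: measurableC.
apply: (le_trans (measureU2 P _ m4)); first by do 2 apply: measurableU => //.
apply: (le_trans (leeD (measureU2 P _ m3) (lexx _))); first exact: measurableU.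
apply: (le_trans (leeD (leeD (measureU2 P m1 m2) (lexx _)) (lexx _))).
have b1 := unif_le _ _ _ P _ _ _ a0 UW (ltW e0).
have b2 : (P A2 <= 0)%E by rewrite (unif_out _ _ _ P _ _ UV).
have b3 : (P A3 <= 0)%E by rewrite (Nall_spec _ _ _ P _ _ mx xb n).2.
have b4 := cheb _ _ _ P _ _ mx xb xind p01 n _ (cpos n Nn).
apply: (le_trans (leeD (leeD (leeD b1 b2) b3) b4)); rewrite !adde0 -EFinD lee_fin.
have := HN' n N'n.
have -> : eps / a = eta / 2 by rewrite /eps; field; rewrite gt_eqF.
lra.
Qed.

Lemma mEvt (R : realType) (d : measure_display) (T : measurableType d)
  (o11 o12 o21 o22 : R) (x : nat -> T -> R) (W0 V0 : T -> R) (f g : R) n :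
  (forall i, measurable_fun setT (x i.+1)) ->
  measurable_fun setT W0 -> measurable_fun setT V0 ->
  measurable [set t | V0 t * Wn o11 o12 o21 o22 x n g t < W0 t * Wn o11 o12 o21 o22 x n f t].
Proof.
move=> mx mW mV.
have mh : measurable_fun setT (fun t => W0 t * Wn o11 o12 o21 o22 x n f t - V0 t * Wn o11 o12 o21 o22 x n g t).
  apply: measurable_realfun.measurable_funB; apply: measurable_realfun.measurable_funM => //; exact: mWn.
have -> : [set t | V0 t * Wn o11 o12 o21 o22 x n g t < W0 t * Wn o11 o12 o21 o22 x n f t] = setT `&` (fun t => W0 t * Wn o11 o12 o21 o22 x n f t - V0 t * Wn o11 o12 o21 o22 x n g t) @^-1` `]0, +oo[.
  apply/seteqP; split => t /=; first by move=> h; split => //; rewrite in_itv /= andbT subr_gt0.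
  by move=> [_]; rewrite in_itv /= andbT subr_gt0.
apply: (mh measurableT); exact: measurable_itv.
Qed.

Lemma conv_zero (R : realType) (d : measure_display) (T : measurableType d) (P : probability T R)
  (F G : nat -> set T) : (forall n, measurable (F n)) -> (forall n, measurable (G n)) ->
  (forall n, F n `<=` ~` G n) ->
  (forall eta : R, 0 < eta -> exists N, forall n, (N <= n)%N -> (P (~` G n) <= eta%:E)%E) ->
  (fun n => P (F n)) @ \oo --> 0%:E.
Proof.
move=> mF mG sub H.
have fin : forall n, P (F n) \is a fin_num.
  move=> n; rewrite ge0_fin_numE ?measure_ge0 //.
  by apply: (le_lt_trans (probability_le1 _ _)) => //; exact: ltry.
apply: cvg_EFin; first by apply: nearW => n; exact: fin.
apply/cvgrPdist_le => eta eta0; have [N HN] := H eta eta0.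
exists N => // n /= Nn.
rewrite sub0r normrN ger0_norm; last by apply: fine_ge0; exact: measure_ge0.
have : (P (F n) <= eta%:E)%E.
  apply: le_trans (HN n Nn); apply: le_measure; rewrite ?inE //; exact: measurableC.
by rewrite -[P (F n)]fineK ?lee_fin.
Qed.

Lemma obar_ge0 (R : realType) (u v h : R) : 0 <= u -> 0 <= v -> 0 <= h <= 1 -> 0 <= u * h + v * (1 - h).
Proof. move=> u0 v0 /andP[h0 h1]; apply: addr_ge0; apply: mulr_ge0 => //; lra. Qed.

Theorem proposition7 (R : realType) (o11 o12 o21 o22 p a : R)
  (d : measure_display) (T : measurableType d) (P : probability T R)
  (x : nat -> T -> R) (W0 V0 : T -> R) (f g : R) :
  0 <= o12 -> o12 < o11 -> 0 <= o21 -> o21 < o22 -> 1 < o11 -> 1 < o22 ->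
  0 <= p <= 1 -> 0 < a ->
  (forall i, (1 <= i)%N -> is_bernoulli P p (x i)) ->
  is_uniform0a P a W0 -> is_uniform0a P a V0 ->
  mutually_independent P (joint_family W0 V0 x) ->
  0 <= f <= 1 -> 0 <= g <= 1 ->
  Grate o11 o12 o21 o22 p f != Grate o11 o12 o21 o22 p g ->
  let prob n := P [set t | V0 t * Wn o11 o12 o21 o22 x n g t <
                           W0 t * Wn o11 o12 o21 o22 x n f t] in
  (Grate o11 o12 o21 o22 p g < Grate o11 o12 o21 o22 p f ->
     prob @ \oo --> (1%R)%:E) /\
  (Grate o11 o12 o21 o22 p f < Grate o11 o12 o21 o22 p g ->
     prob @ \oo --> (0%R)%:E).
Proof.
move=> o12g o1211 o21g o2122 o11g o22g p01 a0 xb UW UV [MI1 MI2] f01 g01 Gne prob.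
have mx : forall i, measurable_fun setT (x i.+1) := fun i => MI1 i.+2.
have mW : measurable_fun setT W0 := MI1 0%N.
have mV : measurable_fun setT V0 := MI1 1%N.
have xb' : forall i, is_bernoulli P p (x i.+1) := fun i => xb i.+1 isT.
have xind : forall n (B : nat -> set R), (forall i, measurable (B i)) ->
    P (\bigcap_(i in [set i | (i < n)%N]) (x i.+1 @^-1` B i)) = (\prod_(i < n) P (x i.+1 @^-1` B i))%E.
  move=> n B mB.
  have U : uniq [seq j.+2 | j <- iota 0 n] by rewrite map_inj_uniq ?iota_uniq // => ? ? [].
  have E := MI2 _ (fun j => B j.-2) U (fun j => mB j.-2).
  rewrite big_map in E.
  rewrite -(big_mkord xpredT (fun i => P (x i.+1 @^-1` B i))) /index_iota subn0.
  apply: (etrans _ E); congr (P _).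
  apply/seteqP; split => t /= H.
  - move=> j /mapP[i]; rewrite mem_iota add0n => /andP[_ iltn] ->; exact: H i iltn.
  - move=> i iltn; apply: (H i.+2); apply/mapP; exists i => //; by rewrite mem_iota add0n iltn.
have o11g0 : 0 <= o11 by lra.
have o22g0 : 0 <= o22 by lra.
have f1 : 0 <= obar1 o11 o12 f by exact: obar_ge0.
have f2 : 0 <= obar2 o21 o22 f by exact: obar_ge0.
have g1 : 0 <= obar1 o11 o12 g by exact: obar_ge0.
have g2 : 0 <= obar2 o21 o22 g by exact: obar_ge0.
rewrite /prob; split => G.
  apply: (conv_one _ _ _ P (fun n => [set t | V0 t * Wn o11 o12 o21 o22 x n g t < W0 t * Wn o11 o12 o21 o22 x n f t])) => [n|]; first exact: mEvt.
  exact: (mainA_bound _ _ _ P o11 o12 o21 o22 p a x W0 V0 f g p01 a0 mx xb' xind mW mV UW UV f1 f2 g1 g2 G).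
apply: (conv_zero _ _ _ P _ (fun n => [set t | W0 t * Wn o11 o12 o21 o22 x n f t < V0 t * Wn o11 o12 o21 o22 x n g t])).
- move=> n; exact: mEvt.
- move=> n; exact: mEvt.
- by move=> n t /= h1 h2; have := lt_trans h1 h2; rewrite ltxx.
- exact: (mainA_bound _ _ _ P o11 o12 o21 o22 p a x V0 W0 g f p01 a0 mx xb' xind mV mW UV UW g1 g2 f1 f2 G).
Qed.
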